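(* Let $N$ be a sub-sound tWF net, $M$ a sub-sound tWF net whose node set is disjoint from that of $N$, and $t$ a transition of $N$. Then the tWF net $N\otimes_t M$ is sub-sound.
   Context: Petri nets and markings. A Petri net is a triple $(P,T,F)$ with $P$ a finite set of places, $T$ a finite set of transitions, $P\cap T=\emptyset$, and $F\subseteq (P\times T)\cup(T\times P)$. For a node $x$, $\bullet x=\{y\mid (y,x)\in F\}$, $x\bullet=\{y\mid (x,y)\in F\}$. A marking is a multiset over $P$ (a function $P\to\mathbb N$); sets of places are identified with bags of multiplicity one, $+,-,\le$ are pointwise, and $k.m$ is the sum of $k$ copies of $m$. Transition $t$ is enabled at $m$ iff $\bullet t\le m$, firing gives $m-\bullet t+t\bullet$, and $m\xrightarrow{*}m'$ denotes reachability by a finite (possibly empty) firing sequence. Workflow nets. A pWF net is $(P,T,F,I,O)$ with $(P,T,F)$ a Petri net, $I,O\subseteq P$ non-empty, every node reachable by a directed path from some node of $I$, and some node of $O$ reachable from every node. A tWF net is the same with $I,O$ non-empty subsets of $T$. Input nodes may have incoming edges and output nodes outgoing edges. The place-completion $\mathrm{pc}(N)$ of a tWF net $N=(P,T,F,I,O)$ is obtained by adding two fresh places $p_i,p_o$ with edges $(p_i,t)$ for all $t\in I$ and $(t,p_o)$ for all $t\in O$, and taking input set $\{p_i\}$ and output set $\{p_o\}$. Sub-soundness. A pWF net is sub-sound if for all integers $k\ge k'\ge 0$ and every marking $m'$: if $k.I\xrightarrow{*}m'+k'.O$ then $m'\xrightarrow{*}(k-k').O$. A tWF net is sub-sound iff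 its place-completion is. Transition substitution. For a WF net $N=(P,T,F,I,O)$ and a tWF net $M=(P',T',F',I',O')$ with disjoint node sets and $t\in T$, $N\otimes_t M$ is obtained from $N$ by deleting $t$ and all edges incident to $t$, adding all nodes and edges of $M$, adding an edge $(q,t')$ for each $q\in\bullet_N t$ and $t'\in I'$, and an edge $(t',q)$ for each $t'\in O'$ and $q\in t\bullet_N$; its input set is $(I\setminus\{t\})\cup I'$ if $t\in I$ and $I$ otherwise, and its output set is $(O\setminus\{t\})\cup O'$ if $t\in O$ and $O$ otherwise. *)

(* Defs.v *)
(* Nodes of nets are natural numbers, so that
   node sets of different nets live in a common universe and disjointness
   is a genuine hypothesis; fresh nodes are available for place-completion. *)
From mathcomp Require Import all_boot.
Set Implicit Arguments. Unset Strict Implicit. Unset Printing Implicit Defensive.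

Record pnet := PNet { places : seq nat; trans : seq nat; flow : seq (nat * nat) }.

Definition nodes (N : pnet) : seq nat := places N ++ trans N.

Definition is_net (N : pnet) : Prop :=
  (forall x, x \in places N -> x \notin trans N) /\
  (forall e, e \in flow N ->
     (e.1 \in places N /\ e.2 \in trans N) \/ (e.1 \in trans N /\ e.2 \in places N)).

(* Markings: multisets over places, as functions nat -> nat
   (we additionally ask support in P where a marking is quantified). *)
Definition marking := nat -> nat.

Definition setb (s : seq nat) : marking := fun p => nat_of_bool (p \in s).
Definition mscale (k : nat) (m : marking) : marking := fun p => k * m p.
Definition madd (m1 m2 : marking) : marking := fun p => m1 p + m2 p.
Definition supported (N : pnet) (m : marking) : Prop :=
  forall p, p \notin places N -> m p = 0.

Definition preb (N : pnet) (t : nat) : marking := fun p => nat_of_bool ((p, t) \in flow N).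
Definition postb (N : pnet) (t : nat) : marking := fun p => nat_of_bool ((t, p) \in flow N).

Definition enabled (N : pnet) (m : marking) (t : nat) : Prop :=
  t \in trans N /\ forall p, preb N t p <= m p.

Definition fire (N : pnet) (m : marking) (t : nat) : marking :=
  fun p => m p - preb N t p + postb N t p.

Inductive reach (N : pnet) : marking -> marking -> Prop :=
| reach_nil m m' : (forall p, m p = m' p) -> reach N m m'
| reach_cons m t m' : enabled N m t -> reach N (fire N m t) m' -> reach N m m'.

Record wfnet := WFNet { wnet :> pnet; inp : seq nat; outp : seq nat }.

Definition edge (N : pnet) (x y : nat) : Prop := (x, y) \in flow N.
Inductive path_conn (N : pnet) : nat -> nat -> Prop :=
| pc_refl x : path_conn N x x
| pc_step x y z : edge N x y -> path_conn N y z -> path_conn N x z.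

Definition wf_conn (N : wfnet) : Prop :=
  (forall x, x \in nodes N -> exists2 i, i \in inp N & path_conn N i x) /\
  (forall x, x \in nodes N -> exists2 o, o \in outp N & path_conn N x o).

Definition is_pWF (N : wfnet) : Prop :=
  is_net N /\ inp N != [::] /\ outp N != [::] /\
  {subset inp N <= places N} /\ {subset outp N <= places N} /\ wf_conn N.

Definition is_tWF (N : wfnet) : Prop :=
  is_net N /\ inp N != [::] /\ outp N != [::] /\
  {subset inp N <= trans N} /\ {subset outp N <= trans N} /\ wf_conn N.

Definition subsound_p (N : wfnet) : Prop :=
  forall (k k' : nat) (m' : marking), k' <= k -> supported N m' ->
    reach N (mscale k (setb (inp N))) (madd m' (mscale k' (setb (outp N)))) ->
    reach N m' (mscale (k - k') (setb (outp N))).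

Definition maxnode (N : pnet) : nat := foldr maxn 0 (nodes N).

Definition pc (N : wfnet) : wfnet :=
  let p_i := (maxnode N).+1 in
  let p_o := (maxnode N).+2 in
  WFNet (PNet (p_i :: p_o :: places N) (trans N)
              (flow N ++ [seq (p_i, t) | t <- inp N] ++ [seq (t, p_o) | t <- outp N]))
        [:: p_i] [:: p_o].

Definition subsound_t (N : wfnet) : Prop := subsound_p (pc N).

Definition preset (N : pnet) (t : nat) : seq nat := [seq e.1 | e <- flow N & e.2 == t].
Definition postset (N : pnet) (t : nat) : seq nat := [seq e.2 | e <- flow N & e.1 == t].

Definition subst (N : wfnet) (t : nat) (M : wfnet) : wfnet :=
  WFNet
    (PNet (places N ++ places M)
          ([seq x <- trans N | x != t] ++ trans M)
          ([seq e <- flow N | (e.1 != t) && (e.2 != t)] ++ flow M ++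
           [seq (q, t') | q <- preset N t, t' <- inp M] ++
           [seq (t', q) | t' <- outp M, q <- postset N t]))
    (if t \in inp N then [seq x <- inp N | x != t] ++ inp M else inp N)
    (if t \in outp N then [seq x <- outp N | x != t] ++ outp M else outp N).

Definition disjoint_nodes (N M : pnet) : Prop :=
  forall x, x \in nodes N -> x \notin nodes M.

(* Main.v *)
Require Import Defs.
From mathcomp Require Import all_boot zify.
Set Implicit Arguments. Unset Strict Implicit. Unset Printing Implicit Defensive.


Lemma reach_eq (P : pnet) m1 m2 n1 n2 : reach P m1 m2 ->
  (forall p, m1 p = n1 p) -> (forall p, m2 p = n2 p) -> reach P n1 n2.
Proof.
move=> H; elim: H n1 n2 => [m m' E|m u m' [Hu Hen] _ IH] n1 n2 E1 E2.
  by apply: reach_nil => p; rewrite -E1 -E2.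
apply: (@reach_cons _ _ u); first by split=> // p; rewrite -E1.
by apply: IH E2 => p; rewrite /fire E1.
Qed.

Lemma reach_trans (P : pnet) m1 m2 m3 : reach P m1 m2 -> reach P m2 m3 -> reach P m1 m3.
Proof.
elim=> [m m' E|m u m' Hen _ IH] H.
  by apply: reach_eq H _ (fun _ => erefl) => p; rewrite E.
exact: reach_cons Hen (IH H).
Qed.

Lemma reach_add (P : pnet) m1 m2 x : reach P m1 m2 -> reach P (madd m1 x) (madd m2 x).
Proof.
elim=> [m m' E|m u m' [Hu Hen] _ IH].
  by apply: reach_nil => p; rewrite /madd E.
apply: (@reach_cons _ _ u); first by split=> // p; rewrite /madd; have := Hen p; lia.
apply: reach_eq IH _ (fun _ => erefl).
by move=> p; rewrite /madd /fire; have := Hen p; lia.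
Qed.

Definition wellflow (P : pnet) := forall u p, u \in trans P -> p \notin places P ->
  preb P u p = 0 /\ postb P u p = 0.

Lemma reach_supported (P : pnet) m m' : wellflow P -> supported P m -> reach P m m' -> supported P m'.
Proof.
move=> W Hs H; elim: H Hs => [m0 m1 E|m0 u m1 [Hu Hen] _ IH] Hs.
  by move=> p Hp; rewrite -E Hs.
apply: IH => p Hp; rewrite /fire Hs //; have [-> ->] := W u p Hu Hp; by [].
Qed.

Lemma reach_mono_place (P : pnet) o m m' : (forall u, u \in trans P -> preb P u o = 0) ->
  reach P m m' -> m o <= m' o.
Proof.
move=> Ho; elim=> [m0 m1 E|m0 u m1 [Hu Hen] _ IH]; first by rewrite E.
by apply: leq_trans IH; rewrite /fire Ho // subn0 leq_addr.
Qed.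

Lemma mem_mapl (a x y : nat) (s : seq nat) :
  ((x, y) \in [seq (a, z) | z <- s]) = (x == a) && (y \in s).
Proof.
elim: s => [|z s IH] /=; first by rewrite andbF.
by rewrite in_cons IH xpair_eqE; case: (x == a).
Qed.

Lemma mem_mapr (b x y : nat) (s : seq nat) :
  ((x, y) \in [seq (z, b) | z <- s]) = (x \in s) && (y == b).
Proof.
elim: s => [|z s IH] /=; first by [].
by rewrite in_cons IH xpair_eqE andb_orl.
Qed.

Lemma maxnode_ge (R : pnet) x : x \in nodes R -> x <= maxnode R.
Proof.
rewrite /maxnode; elim: (nodes R) => [|y s IH] //=.
rewrite in_cons => /orP [/eqP ->|/IH H]; first exact: leq_maxl.
by apply: leq_trans H (leq_maxr _ _).
Qed.

Lemma mem_flow_pc (R : wfnet) x y : ((x, y) \in flow (pc R)) =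
  [|| (x, y) \in flow R, (x == (maxnode R).+1) && (y \in inp R) |
      (x \in outp R) && (y == (maxnode R).+2)].
Proof. by rewrite /pc /= !mem_cat mem_mapl mem_mapr. Qed.

Lemma flow_nodes (R : pnet) x y : is_net R -> (x, y) \in flow R ->
  (x \in places R /\ y \in trans R) \/ (x \in trans R /\ y \in places R).
Proof. by move=> [_ H] /H. Qed.

Lemma places_nodes (R : pnet) x : x \in places R -> x \in nodes R.
Proof. by rewrite /nodes mem_cat => ->. Qed.
Lemma trans_nodes (R : pnet) x : x \in trans R -> x \in nodes R.
Proof. by rewrite /nodes mem_cat => ->; rewrite orbT. Qed.

Lemma not_node_big (R : pnet) x : maxnode R < x -> x \notin nodes R.
Proof. by move=> H; apply/negP => /maxnode_ge; rewrite leqNgt H. Qed.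

Lemma preb_pc (R : wfnet) u p : u \in trans R ->
  preb (pc R) u p = nat_of_bool (((p, u) \in flow R) || (p == (maxnode R).+1) && (u \in inp R)).
Proof.
move=> Hu; rewrite /preb mem_flow_pc.
have -> : (u == (maxnode R).+2) = false.
  by apply/negbTE/eqP => E; move: (maxnode_ge (trans_nodes Hu)); rewrite E; lia.
by rewrite andbF orbF.
Qed.

Lemma postb_pc (R : wfnet) u p : u \in trans R ->
  postb (pc R) u p = nat_of_bool (((u, p) \in flow R) || (p == (maxnode R).+2) && (u \in outp R)).
Proof.
move=> Hu; rewrite /postb mem_flow_pc.
have -> : (u == (maxnode R).+1) = false.
  by apply/negbTE/eqP => E; move: (maxnode_ge (trans_nodes Hu)); rewrite E; lia.
by rewrite andFb orFb andbC.
Qed.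

Lemma wellflow_pc (R : wfnet) : is_tWF R -> wellflow (pc R).
Proof.
move=> HR u p Hu Hp; rewrite /= in Hu Hp.
move: Hp; rewrite !in_cons !negb_or => /andP [Ha /andP [Hb Hp]].
rewrite preb_pc // postb_pc //.
case: HR => Hnet _.
have E1 : ((p, u) \in flow R) = false.
  apply/negbTE/negP => /(flow_nodes Hnet) [[Hp' _]|[_ Hu']].
    by rewrite Hp' in Hp.
  by case: Hnet => H _; move: (H _ Hu'); rewrite Hu.
have E2 : ((u, p) \in flow R) = false.
  apply/negbTE/negP => /(flow_nodes Hnet) [[Hu' _]|[_ Hp']].
    by case: Hnet => H _; move: (H _ Hu'); rewrite Hu.
  by rewrite Hp' in Hp.
by rewrite E1 E2 (negbTE Ha) (negbTE Hb).
Qed.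

Lemma preb_pc_out (R : wfnet) u : is_tWF R -> u \in trans R -> preb (pc R) u (maxnode R).+2 = 0.
Proof.
move=> HR Hu; rewrite preb_pc //.
have -> : ((maxnode R).+2 == (maxnode R).+1) = false by apply/eqP; lia.
have -> : (((maxnode R).+2, u) \in flow R) = false.
  apply/negbTE/negP => /(flow_nodes HR.1) [[H _]|[H _]].
    by move: (maxnode_ge (places_nodes H)); rewrite ltnNge leqnSn.
  by move: (maxnode_ge (trans_nodes H)); rewrite ltnNge leqnSn.
by [].
Qed.

Lemma out_le (R : wfnet) k Z : is_tWF R -> subsound_t R ->
  reach (pc R) (mscale k (setb (inp (pc R)))) Z -> supported (pc R) Z ->
  Z (maxnode R).+2 <= k.
Proof.
move=> HR Hs H HZ.
set o := (maxnode R).+2.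
rewrite leqNgt; apply/negP => Hlt.
set m' : marking := fun p => if p == o then Z o - k else Z p.
have Hm : supported (pc R) m'.
  move=> p Hp; rewrite /m'; case: eqP => [E|_]; last exact: HZ.
  by move: Hp; rewrite E /= !in_cons eqxx orbT.
have H2 := Hs k k m' (leqnn k) Hm.
have H3 : reach (pc R) m' (mscale (k - k) (setb (outp (pc R)))).
  apply: H2; apply: reach_eq H (fun _ => erefl) _ => p.
  rewrite /madd /mscale /setb /m' /= in_cons in_nil orbF.
  by case: eqP => [->|]; [lia|rewrite muln0 addn0].
have := reach_mono_place (o := o) _ H3.
rewrite /m' eqxx /mscale subnn mul0n.
move=> /(_ (fun u Hu => preb_pc_out HR Hu)); lia.
Qed.

Lemma flow_node1 (R : pnet) x y : is_net R -> (x, y) \in flow R -> x \in nodes R.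
Proof. by move=> H /(flow_nodes H) [[H1 _]|[H1 _]]; [apply: places_nodes|apply: trans_nodes]. Qed.
Lemma flow_node2 (R : pnet) x y : is_net R -> (x, y) \in flow R -> y \in nodes R.
Proof. by move=> H /(flow_nodes H) [[_ H1]|[_ H1]]; [apply: trans_nodes|apply: places_nodes]. Qed.

Lemma flow_pre_place (R : pnet) x y : is_net R -> (x, y) \in flow R -> y \in trans R -> x \in places R.
Proof.
move=> H /(flow_nodes H) [[H1 _]|[H1 H2]] // Hy.
by case: H => H _; move: (H _ H2); rewrite Hy.
Qed.
Lemma flow_post_place (R : pnet) x y : is_net R -> (x, y) \in flow R -> x \in trans R -> y \in places R.
Proof.
move=> H /(flow_nodes H) [[H1 H2]|[_ H1]] // Hy.
by case: H => H _; move: (H _ H1); rewrite Hy.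
Qed.

Lemma mem_preset (R : pnet) x t : (x \in preset R t) = ((x, t) \in flow R).
Proof.
rewrite /preset; apply/mapP/idP => [[[a b]]|H].
  by rewrite mem_filter /= => /andP [/eqP -> H] ->.
by exists (x, t) => //; rewrite mem_filter eqxx.
Qed.
Lemma mem_postset (R : pnet) x t : (x \in postset R t) = ((t, x) \in flow R).
Proof.
rewrite /postset; apply/mapP/idP => [[[a b]]|H].
  by rewrite mem_filter /= => /andP [/eqP -> H] ->.
by exists (t, x) => //; rewrite mem_filter eqxx.
Qed.

Lemma mem_pairs1 (x y : nat) (s1 s2 : seq nat) :
  ((x, y) \in [seq (q, t') | q <- s1, t' <- s2]) = (x \in s1) && (y \in s2).
Proof.
apply/allpairsP/andP => [[[a b] /= [H1 H2 [-> ->]]]|[H1 H2]] //.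
by exists (x, y).
Qed.

Section Subst.
Variables (N M : wfnet) (t : nat).
Hypothesis HN : is_tWF N.
Hypothesis HM : is_tWF M.
Hypothesis Hd : disjoint_nodes N M.
Hypothesis Ht : t \in trans N.

Local Notation S := (subst N t M).
Local Notation aN := ((maxnode N).+1).
Local Notation bN := ((maxnode N).+2).
Local Notation aM := ((maxnode M).+1).
Local Notation bM := ((maxnode M).+2).
Local Notation aS := ((maxnode S).+1).
Local Notation bS := ((maxnode S).+2).

Let netN : is_net N := HN.1.
Let netM : is_net M := HM.1.

Lemma PTN x : x \in places N -> x \in trans N -> False.
Proof. by case: netN => H _ /H /negbTE ->. Qed.
Lemma PTM x : x \in places M -> x \in trans M -> False.
Proof. by case: netM => H _ /H /negbTE ->. Qed.
Lemma NM x : x \in nodes N -> x \in nodes M -> False.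
Proof. by move/Hd/negbTE => ->. Qed.

Lemma inpN x : x \in inp N -> x \in trans N.
Proof. by case: HN => _ [_ [_ [H _]]] /H. Qed.
Lemma outpN x : x \in outp N -> x \in trans N.
Proof. by case: HN => _ [_ [_ [_ [H _]]]] /H. Qed.
Lemma inpM x : x \in inp M -> x \in trans M.
Proof. by case: HM => _ [_ [_ [H _]]] /H. Qed.
Lemma outpM x : x \in outp M -> x \in trans M.
Proof. by case: HM => _ [_ [_ [_ [H _]]]] /H. Qed.

Lemma bigN x : x \in nodes N -> (x == aN) = false /\ (x == bN) = false.
Proof. by move/maxnode_ge => H; split; apply/eqP; lia. Qed.
Lemma bigM x : x \in nodes M -> (x == aM) = false /\ (x == bM) = false.
Proof. by move/maxnode_ge => H; split; apply/eqP; lia. Qed.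
Lemma bigS x : x \in nodes S -> (x == aS) = false /\ (x == bS) = false.
Proof. by move/maxnode_ge => H; split; apply/eqP; lia. Qed.

Lemma pN_S x : x \in places N -> x \in nodes S.
Proof. by move=> H; rewrite /nodes /= !mem_cat H. Qed.
Lemma pM_S x : x \in places M -> x \in nodes S.
Proof. by move=> H; rewrite /nodes /= !mem_cat H orbT. Qed.
Lemma tM_S x : x \in trans M -> x \in nodes S.
Proof. by move=> H; rewrite /nodes /= !mem_cat H !orbT. Qed.
Lemma tN_S x : x \in trans N -> x != t -> x \in nodes S.
Proof. by move=> H1 H2; rewrite /nodes /= !mem_cat mem_filter H1 H2 !orbT. Qed.

Lemma abS : (aS == bS) = false. Proof. by apply/eqP; lia. Qed.
Lemma abN : (aN == bN) = false. Proof. by apply/eqP; lia. Qed.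
Lemma abM : (aM == bM) = false. Proof. by apply/eqP; lia. Qed.
Lemma baS : (bS == aS) = false. Proof. by apply/eqP; lia. Qed.
Lemma baN : (bN == aN) = false. Proof. by apply/eqP; lia. Qed.
Lemma baM : (bM == aM) = false. Proof. by apply/eqP; lia. Qed.

Lemma mem_flow_S x y : ((x, y) \in flow S) =
  [|| [&& (x, y) \in flow N, x != t & y != t], (x, y) \in flow M,
      (x \in preset N t) && (y \in inp M) | (x \in outp M) && (y \in postset N t)].
Proof. by rewrite /subst /= !mem_cat mem_filter !mem_pairs1 /= andbC. Qed.


Lemma inpS_N u : u \in trans N -> u != t -> (u \in inp S) = (u \in inp N).
Proof.
move=> Hu Hut; rewrite /subst /=; case: ifP => // _.
rewrite mem_cat mem_filter Hut /=.
have -> : (u \in inp M) = false.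
  by apply/negbTE/negP => /inpM /trans_nodes /(NM (trans_nodes Hu)).
by rewrite orbF.
Qed.
Lemma outpS_N u : u \in trans N -> u != t -> (u \in outp S) = (u \in outp N).
Proof.
move=> Hu Hut; rewrite /subst /=; case: ifP => // _.
rewrite mem_cat mem_filter Hut /=.
have -> : (u \in outp M) = false.
  by apply/negbTE/negP => /outpM /trans_nodes /(NM (trans_nodes Hu)).
by rewrite orbF.
Qed.
Lemma inpS_M u : u \in trans M -> (u \in inp S) = (t \in inp N) && (u \in inp M).
Proof.
move=> Hu; rewrite /subst /=; case: ifP => Hti /=.
  rewrite mem_cat mem_filter.
  have -> : (u \in inp N) = false.
    by apply/negbTE/negP => /inpN /trans_nodes /NM; apply; apply: trans_nodes.
  by rewrite andbF.
by apply/negbTE/negP => /inpN /trans_nodes /NM; apply; apply: trans_nodes.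
Qed.
Lemma outpS_M u : u \in trans M -> (u \in outp S) = (t \in outp N) && (u \in outp M).
Proof.
move=> Hu; rewrite /subst /=; case: ifP => Hti /=.
  rewrite mem_cat mem_filter.
  have -> : (u \in outp N) = false.
    by apply/negbTE/negP => /outpN /trans_nodes /NM; apply; apply: trans_nodes.
  by rewrite andbF.
by apply/negbTE/negP => /outpN /trans_nodes /NM; apply; apply: trans_nodes.
Qed.

Lemma flowS_preN u p : u \in trans N -> u != t -> ((p, u) \in flow S) = ((p, u) \in flow N).
Proof.
move=> Hu Hut; rewrite mem_flow_S.
have -> : ((p, u) \in flow M) = false.
  by apply/negbTE/negP => /(flow_node2 netM) /(NM (trans_nodes Hu)).
have -> : (u \in inp M) = false.
  by apply/negbTE/negP => /inpM /trans_nodes /(NM (trans_nodes Hu)).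
have -> : (u \in postset N t) = false.
  by apply/negbTE/negP; rewrite mem_postset => /(flow_post_place netN) /(_ Ht) /PTN; apply.
rewrite Hut !andbF !orbF andbT.
case E: ((p, u) \in flow N) => //=.
apply/eqP => Ept; move: E; rewrite Ept => /(flow_pre_place netN) /(_ Hu) /PTN; apply; exact Ht.
Qed.
Lemma flowS_postN u p : u \in trans N -> u != t -> ((u, p) \in flow S) = ((u, p) \in flow N).
Proof.
move=> Hu Hut; rewrite mem_flow_S.
have -> : ((u, p) \in flow M) = false.
  by apply/negbTE/negP => /(flow_node1 netM) /(NM (trans_nodes Hu)).
have -> : (u \in outp M) = false.
  by apply/negbTE/negP => /outpM /trans_nodes /(NM (trans_nodes Hu)).
have -> : (u \in preset N t) = false.
  by apply/negbTE/negP; rewrite mem_preset => /(flow_pre_place netN) /(_ Ht) /PTN; apply.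
rewrite Hut /= !orbF.
case E: ((u, p) \in flow N) => //=.
apply/eqP => Ept; move: E; rewrite Ept => /(flow_post_place netN) /(_ Hu) /PTN; apply; exact Ht.
Qed.
Lemma flowS_preM u p : u \in trans M ->
  ((p, u) \in flow S) = ((p, u) \in flow M) || (p \in preset N t) && (u \in inp M).
Proof.
move=> Hu; rewrite mem_flow_S.
have -> : ((p, u) \in flow N) = false.
  by apply/negbTE/negP => /(flow_node2 netN) /NM; apply; apply: trans_nodes.
have -> : (u \in postset N t) = false.
  by apply/negbTE/negP; rewrite mem_postset => /(flow_node2 netN) /NM; apply; apply: trans_nodes.
by rewrite andbF orbF.
Qed.
Lemma flowS_postM u p : u \in trans M ->
  ((u, p) \in flow S) = ((u, p) \in flow M) || (u \in outp M) && (p \in postset N t).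
Proof.
move=> Hu; rewrite mem_flow_S.
have -> : ((u, p) \in flow N) = false.
  by apply/negbTE/negP => /(flow_node1 netN) /NM; apply; apply: trans_nodes.
have -> : (u \in preset N t) = false.
  by apply/negbTE/negP; rewrite mem_preset => /(flow_node1 netN) /NM; apply; apply: trans_nodes.
by [].
Qed.


Lemma nfpreN x u : u \in trans N -> x \notin places N -> ((x, u) \in flow N) = false.
Proof. by move=> Hu Hx; apply/negbTE/negP => /(flow_pre_place netN) /(_ Hu); apply/negP. Qed.
Lemma nfpostN x u : u \in trans N -> x \notin places N -> ((u, x) \in flow N) = false.
Proof. by move=> Hu Hx; apply/negbTE/negP => /(flow_post_place netN) /(_ Hu); apply/negP. Qed.
Lemma nfpreM x u : u \in trans M -> x \notin places M -> ((x, u) \in flow M) = false.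
Proof. by move=> Hu Hx; apply/negbTE/negP => /(flow_pre_place netM) /(_ Hu); apply/negP. Qed.
Lemma nfpostM x u : u \in trans M -> x \notin places M -> ((u, x) \in flow M) = false.
Proof. by move=> Hu Hx; apply/negbTE/negP => /(flow_post_place netM) /(_ Hu); apply/negP. Qed.

Lemma aS_N : aS \notin places N. Proof. by apply/negP => /pN_S /bigS []; rewrite eqxx. Qed.
Lemma bS_N : bS \notin places N. Proof. by apply/negP => /pN_S /bigS [_]; rewrite eqxx. Qed.
Lemma aS_M : aS \notin places M. Proof. by apply/negP => /pM_S /bigS []; rewrite eqxx. Qed.
Lemma bS_M : bS \notin places M. Proof. by apply/negP => /pM_S /bigS [_]; rewrite eqxx. Qed.
Lemma aN_N : aN \notin places N. Proof. by apply/negP => /places_nodes /bigN []; rewrite eqxx. Qed.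
Lemma bN_N : bN \notin places N. Proof. by apply/negP => /places_nodes /bigN [_]; rewrite eqxx. Qed.
Lemma aM_M : aM \notin places M. Proof. by apply/negP => /places_nodes /bigM []; rewrite eqxx. Qed.
Lemma bM_M : bM \notin places M. Proof. by apply/negP => /places_nodes /bigM [_]; rewrite eqxx. Qed.
Lemma pN_M p : p \in places N -> p \notin places M.
Proof. by move=> H; apply/negP => /places_nodes; apply: NM; apply: places_nodes. Qed.

Definition fromN (f : marking) : marking := fun p =>
  if p == aS then f aN else if p == bS then f bN else if p \in places N then f p else 0.
Definition toN (X : marking) : marking := fun p =>
  if p == aN then X aS else if p == bN then X bS else if p \in places N then X p else 0.

Lemma S1pre u p : u \in trans N -> u != t -> preb (pc S) u p = fromN (preb (pc N) u) p.
Proof.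
move=> Hu Hut; have HuS : u \in trans S by rewrite /= mem_cat mem_filter Hut Hu.
rewrite preb_pc // /fromN !preb_pc // flowS_preN // inpS_N //.
have aNf := (bigN (places_nodes _)).
case: (p =P aS) => [->|/eqP/negbTE Hpa].
  by rewrite !nfpreN // ?aS_N ?aN_N ?eqxx.
case: (p =P bS) => [->|/eqP/negbTE Hpb].
  by rewrite !nfpreN ?bS_N ?bN_N // baN.
case: ifP => Hp.
  by rewrite (bigN (places_nodes Hp)).1.
by rewrite nfpreN // Hp.
Qed.

Lemma S1post u p : u \in trans N -> u != t -> postb (pc S) u p = fromN (postb (pc N) u) p.
Proof.
move=> Hu Hut; have HuS : u \in trans S by rewrite /= mem_cat mem_filter Hut Hu.
rewrite postb_pc // /fromN !postb_pc // flowS_postN // outpS_N //.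
case: (p =P aS) => [->|/eqP/negbTE Hpa].
  by rewrite !nfpostN // ?aS_N ?aN_N // abS abN.
case: (p =P bS) => [->|/eqP/negbTE Hpb].
  by rewrite !nfpostN // ?bS_N ?bN_N // !eqxx.
case: ifP => Hp.
  by rewrite (bigN (places_nodes Hp)).2.
by rewrite nfpostN // Hp.
Qed.


Lemma tMS u : u \in trans M -> u \in trans S.
Proof. by move=> Hu; rewrite /= mem_cat Hu orbT. Qed.

Lemma S2pre u p : u \in trans M -> p \notin places M ->
  preb (pc S) u p = (u \in inp M) * fromN (preb (pc N) t) p.
Proof.
move=> Hu Hp; rewrite preb_pc ?tMS // flowS_preM // inpS_M // nfpreM // /=.
rewrite /fromN !preb_pc //.
case: (u \in inp M); rewrite ?mul0n ?mul1n ?andbF ?andbT ?orbF //.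
rewrite mem_preset.
case: (p =P aS) => [->|/eqP/negbTE Hpa].
  by rewrite !nfpreN // ?aS_N ?aN_N ?eqxx.
case: (p =P bS) => [->|/eqP/negbTE Hpb].
  by rewrite !nfpreN ?bS_N ?bN_N // baN.
case: ifP => Hp'.
  by rewrite (bigN (places_nodes Hp')).1 orbF.
by rewrite nfpreN // Hp'.
Qed.

Lemma S2post u p : u \in trans M -> p \notin places M ->
  postb (pc S) u p = (u \in outp M) * fromN (postb (pc N) t) p.
Proof.
move=> Hu Hp; rewrite postb_pc ?tMS // flowS_postM // outpS_M // nfpostM // /=.
rewrite /fromN !postb_pc //.
case: (u \in outp M); rewrite ?mul0n ?mul1n ?andbF ?andbT ?orbF //.
rewrite mem_postset.
case: (p =P aS) => [->|/eqP/negbTE Hpa].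
  by rewrite !nfpostN // ?aS_N ?aN_N // abS abN.
case: (p =P bS) => [->|/eqP/negbTE Hpb].
  by rewrite !nfpostN // ?bS_N ?bN_N // !eqxx.
case: ifP => Hp'.
  by rewrite (bigN (places_nodes Hp')).2 orbF.
by rewrite nfpostN // Hp'.
Qed.

Lemma S3pre u p : u \in trans M -> p \in places M -> preb (pc S) u p = preb (pc M) u p.
Proof.
move=> Hu Hp; rewrite !preb_pc ?tMS // flowS_preM // inpS_M // mem_preset.
have -> : ((p, t) \in flow N) = false.
  by apply/negbTE/negP => /(flow_node1 netN) /NM; apply; apply: places_nodes.
have -> : (p == aS) = false by apply/negbTE/negP => /eqP E; move: Hp; rewrite E (negbTE aS_M).
have -> : (p == aM) = false by apply/negbTE/negP => /eqP E; move: Hp; rewrite E (negbTE aM_M).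
by rewrite /= !orbF.
Qed.

Lemma S3post u p : u \in trans M -> p \in places M -> postb (pc S) u p = postb (pc M) u p.
Proof.
move=> Hu Hp; rewrite !postb_pc ?tMS // flowS_postM // outpS_M // mem_postset.
have -> : ((t, p) \in flow N) = false.
  by apply/negbTE/negP => /(flow_node2 netN) /NM; apply; apply: places_nodes.
have -> : (p == bS) = false by apply/negbTE/negP => /eqP E; move: Hp; rewrite E (negbTE bS_M).
have -> : (p == bM) = false by apply/negbTE/negP => /eqP E; move: Hp; rewrite E (negbTE bM_M).
by rewrite !andbF !orbF.
Qed.

Lemma S4pre u p : u \in trans M -> p \notin places M ->
  preb (pc M) u p = nat_of_bool ((p == aM) && (u \in inp M)).
Proof. by move=> Hu Hp; rewrite preb_pc // nfpreM. Qed.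
Lemma S4post u p : u \in trans M -> p \notin places M ->
  postb (pc M) u p = nat_of_bool ((p == bM) && (u \in outp M)).
Proof. by move=> Hu Hp; rewrite postb_pc // nfpostM. Qed.


Lemma fromN_M f p : p \in places M -> fromN f p = 0.
Proof.
move=> Hp; rewrite /fromN.
have -> : (p == aS) = false by apply/negbTE/negP => /eqP E; move: Hp; rewrite E (negbTE aS_M).
have -> : (p == bS) = false by apply/negbTE/negP => /eqP E; move: Hp; rewrite E (negbTE bS_M).
case: ifP => // H; by move: (pN_M H); rewrite Hp.
Qed.

Lemma fromN_le f g p : (forall q, f q <= g q) -> fromN f p <= fromN g p.
Proof. by move=> H; rewrite /fromN; case: ifP => _; [|case: ifP => _; [|case: ifP]]. Qed.

Definition L (W Z : marking) : marking := fun p =>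
  if p \in places M then Z p
  else W p + Z aM * fromN (preb (pc N) t) p + Z bM * fromN (postb (pc N) t) p.

Lemma liftM W Z1 Z2 : reach (pc M) Z1 Z2 -> reach (pc S) (L W Z1) (L W Z2).
Proof.
elim=> [Z Z' E|Z u Z' [Hu Hen] _ IH].
  by apply: reach_nil => p; rewrite /L !E.
have HaM : (u \in inp M) <= Z aM.
  by move: (Hen aM); rewrite /= S4pre // ?aM_M // eqxx.
apply: (@reach_cons _ _ u).
  split; first exact: tMS.
  move=> p; rewrite /L; case: ifP => Hp.
    by rewrite S3pre //; apply: Hen.
  rewrite S2pre ?Hp //.
  apply: leq_trans (leq_addr _ _); apply: leq_trans (leq_addl _ _).
  by apply: leq_mul.
apply: reach_eq IH _ (fun _ => erefl) => p.
rewrite /fire /L; case: ifP => Hp.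
  by rewrite S3pre // S3post.
rewrite S2pre ?Hp // S2post ?Hp //.
rewrite !S4pre ?aM_M ?bM_M // !S4post ?aM_M ?bM_M // eqxx abM baM /=.
move: HaM; case: (u \in inp M); case: (u \in outp M) => /= HaM; nia.
Qed.

Lemma fromN_fire f g h p : fromN (fun q => f q - g q + h q) p = fromN f p - fromN g p + fromN h p.
Proof. by rewrite /fromN; case: ifP => _; [|case: ifP => _; [|case: ifP]]. Qed.

Hypothesis HsM : subsound_t M.

Lemma M_one : reach (pc M) (setb [:: aM]) (setb [:: bM]).
Proof.
have := HsM (k := 1) (k' := 0) (m' := setb [:: aM]) (leq0n _).
have Hs : supported (pc M) (setb [:: aM]).
  by move=> p; rewrite /setb /= !in_cons !negb_or in_nil => /andP [/negbTE -> _].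
move=> /(_ Hs) H.
have H1 : reach (pc M) (mscale 1 (setb (inp (pc M)))) (madd (setb [:: aM]) (mscale 0 (setb (outp (pc M))))).
  by apply: reach_nil => p; rewrite /madd /mscale mul1n mul0n addn0.
by apply: reach_eq (H H1) _ _ => p; rewrite /mscale ?mul1n.
Qed.

Lemma liftN Y1 Y2 : reach (pc N) Y1 Y2 -> reach (pc S) (fromN Y1) (fromN Y2).
Proof.
elim=> [Y Y' E|Y u Y' [Hu Hen] _ IH].
  by apply: reach_nil => p; rewrite /fromN !E.
case: (u =P t) => [Eut|/eqP Hut]; last first.
  apply: (@reach_cons _ _ u).
    split; first by rewrite /= mem_cat mem_filter Hut Hu.
    by move=> p; rewrite S1pre //; apply: fromN_le.
  apply: reach_eq IH _ (fun _ => erefl) => p.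
  by rewrite /fire S1pre // S1post // -fromN_fire.
subst u.
set W : marking := fun p => fromN Y p - fromN (preb (pc N) t) p.
have Hle p : fromN (preb (pc N) t) p <= fromN Y p by apply: fromN_le.
apply: reach_trans (reach_eq (liftM W M_one) _ _) IH.
  move=> p; rewrite /L /W /setb; case: ifP => Hp.
    rewrite fromN_M // in_cons in_nil orbF.
    by case: eqP => // E; move: Hp; rewrite E (negbTE aM_M).
  rewrite !in_cons !in_nil !orbF eqxx baM mul1n mul0n addn0.
  by move: (Hle p); lia.
move=> p; rewrite /L /W /setb; case: ifP => Hp.
  rewrite fromN_M // in_cons in_nil orbF.
  by case: eqP => // E; move: Hp; rewrite E (negbTE bM_M).
rewrite !in_cons !in_nil !orbF eqxx abM mul1n mul0n addn0.
by rewrite /fire fromN_fire.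
Qed.


Lemma toN_fire (P : pnet) X u p :
  toN (fire P X u) p = toN X p - toN (preb P u) p + toN (postb P u) p.
Proof. by rewrite /toN; case: ifP => _; [|case: ifP => _; [|case: ifP]]. Qed.

Lemma toN_ext f g p : (forall q, q \notin places M -> f q = g q) -> toN f p = toN g p.
Proof.
move=> H; rewrite /toN; case: ifP => _; first by rewrite H // aS_M.
case: ifP => _; first by rewrite H // bS_M.
by case: ifP => // Hp; rewrite H // pN_M.
Qed.

Lemma toN_scale c f p : toN (fun q => c * f q) p = c * toN f p.
Proof. by rewrite /toN; case: ifP => _; [|case: ifP => _; [|case: ifP; rewrite ?muln0]]. Qed.

Lemma toN_le f g p : (forall q, f q <= g q) -> toN f p <= toN g p.
Proof. by move=> H; rewrite /toN; case: ifP => _; [|case: ifP => _; [|case: ifP]]. Qed.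

Lemma toN_fromN f p : (forall q, q \notin places (pc N) -> f q = 0) -> toN (fromN f) p = f p.
Proof.
move=> H; rewrite /toN /fromN.
case: ifP => [/eqP ->|Ha]; first by rewrite eqxx.
case: ifP => [/eqP ->|Hb]; first by rewrite baS eqxx.
case: ifP => Hp; last by rewrite H //= !in_cons Ha Hb Hp.
have [-> ->] : (p == aS) = false /\ (p == bS) = false by apply: bigS; apply: pN_S.
by rewrite Hp.
Qed.

Lemma supN u : u \in trans N -> forall q, q \notin places (pc N) -> preb (pc N) u q = 0 /\ postb (pc N) u q = 0.
Proof. by move=> Hu q Hq; apply: (wellflow_pc HN). Qed.

Definition Inv k X := exists Y s Z,
  [/\ reach (pc N) (mscale k (setb [:: aN])) Y, reach (pc M) (mscale s (setb [:: aM])) Z,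
      Z aM = 0, (forall p, p \in places M -> Z p = X p) &
      (forall p, Y p = toN X p + (s - Z bM) * postb (pc N) t p)].

Lemma supp_init s : supported (pc M) (mscale s (setb [:: aM])).
Proof. by move=> p; rewrite /mscale /setb /= !in_cons !negb_or in_nil => /andP [/negbTE -> _]; rewrite muln0. Qed.

Lemma outM s Z : reach (pc M) (mscale s (setb [:: aM])) Z -> Z bM <= s.
Proof.
move=> H; apply: (out_le HM HsM H).
exact: reach_supported (wellflow_pc HM) (supp_init s) H.
Qed.

Lemma postN01 p : postb (pc N) t p <= 1.
Proof. by rewrite /postb; case: (_ \in _). Qed.
Lemma preN01 p : preb (pc N) t p <= 1.
Proof. by rewrite /preb; case: (_ \in _). Qed.

Lemma Inv_step k X u : Inv k X -> enabled (pc S) X u -> Inv k (fire (pc S) X u).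
Proof.
move=> [Y [s [Z [HY HZ HZa HZX HYX]]]] [Hu Hen].
move: (Hu); rewrite /= mem_cat mem_filter => /orP [/andP [Hut HuN]|HuM].
-
  have Hpre q : toN (preb (pc S) u) q = preb (pc N) u q.
    rewrite (toN_ext (g := fromN (preb (pc N) u))) ?toN_fromN //.
      by move=> r /(supN HuN) [].
    by move=> r _; apply: S1pre.
  have Hpost q : toN (postb (pc S) u) q = postb (pc N) u q.
    rewrite (toN_ext (g := fromN (postb (pc N) u))) ?toN_fromN //.
      by move=> r /(supN HuN) [].
    by move=> r _; apply: S1post.
  have Hle q : preb (pc N) u q <= toN X q by rewrite -Hpre; apply: toN_le.
  exists (fire (pc N) Y u), s, Z; split => //.
  + apply: (reach_trans HY); apply: (@reach_cons _ _ u); last exact: reach_nil.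
    by split=> // q; rewrite HYX; apply: leq_trans (Hle q) (leq_addr _ _).
  + move=> p Hp; rewrite /fire S1pre // S1post // !fromN_M //.
    by rewrite subn0 addn0 HZX.
  + move=> p; rewrite toN_fire Hpre Hpost /fire HYX.
    by move: (Hle p) ((s - Z bM) * postb (pc N) t p) => H K; lia.
-
  set i := (u \in inp M); set o := (u \in outp M).
  have Hpre q : toN (preb (pc S) u) q = i * preb (pc N) t q.
    rewrite (toN_ext (g := fun r => i * fromN (preb (pc N) t) r)) ?toN_scale ?toN_fromN //.
      by move=> r /(supN Ht) [].
    by move=> r Hr; apply: S2pre.
  have Hpost q : toN (postb (pc S) u) q = o * postb (pc N) t q.
    rewrite (toN_ext (g := fun r => o * fromN (postb (pc N) t) r)) ?toN_scale ?toN_fromN //.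
      by move=> r /(supN Ht) [].
    by move=> r Hr; apply: S2post.
  have Hle q : i * preb (pc N) t q <= toN X q by rewrite -Hpre; apply: toN_le.
  set Z0 := madd Z (mscale i (setb [:: aM])).
  have HenM : enabled (pc M) Z0 u.
    split=> // q; rewrite /Z0 /madd /mscale /setb.
    case Hq: (q \in places M).
      by rewrite -S3pre // HZX //; apply: leq_trans (Hen q) (leq_addr _ _).
    rewrite S4pre ?Hq // in_cons in_nil orbF; apply: leq_trans (leq_addl _ _).
    by case: (q == aM); rewrite ?andbT ?andbF ?muln1 ?muln0.
  set Z' := fire (pc M) Z0 u.
  have HZ' : reach (pc M) (mscale (s + i) (setb [:: aM])) Z'.
    apply: reach_trans (reach_eq (reach_add (mscale i (setb [:: aM])) HZ) _ (fun _ => erefl)) _.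
      by move=> q; rewrite /madd /mscale mulnDl.
    by apply: (@reach_cons _ _ u) => //; exact: reach_nil.
  have HZ'b : Z' bM = Z bM + o.
    rewrite /Z' /fire /Z0 /madd /mscale /setb S4pre ?S4post ?bM_M // in_cons in_nil orbF.
    by rewrite baM eqxx muln0 addn0 subn0.
  have Hc := outM HZ'.
  have HYt : reach (pc N) (mscale k (setb [:: aN])) (if i then fire (pc N) Y t else Y).
    case Hi: i => //.
    apply: (reach_trans HY); apply: (@reach_cons _ _ t); last exact: reach_nil.
    split=> // q; move: (Hle q); rewrite Hi mul1n HYX => H.
    by apply: leq_trans H (leq_addr _ _).
  exists (if i then fire (pc N) Y t else Y), (s + i), Z'; split => //.
  + rewrite /Z' /fire /Z0 /madd /mscale /setb S4pre ?S4post ?aM_M // in_cons in_nil orbF.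
    by rewrite abM eqxx HZa /= muln1 -/i; lia.
  + move=> p Hp; rewrite /Z' /fire /Z0 /madd /mscale /setb S3pre // S3post // HZX //.
    rewrite in_cons in_nil orbF.
    have -> : (p == aM) = false by apply/negbTE/negP => /eqP E; move: Hp; rewrite E (negbTE aM_M).
    by rewrite muln0 addn0.
  + move=> p; rewrite toN_fire Hpre Hpost HZ'b.
    have := Hle p; have := postN01 p; have := preN01 p.
    have := outM HZ; move: Hc; rewrite HZ'b.
    case Hi: i; rewrite /fire HYX;
    move: (preb (pc N) t p) (postb (pc N) t p) => a b; case Ho: o => /=;
    case: b => [|[|b]] /=; rewrite ?muln0 ?muln1; lia.
Qed.


Lemma Inv_eq k X X' : Inv k X -> (forall p, X p = X' p) -> Inv k X'.
Proof.
move=> [Y [s [Z [H1 H2 H3 H4 H5]]]] E; exists Y, s, Z; split => //.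
  by move=> p Hp; rewrite -E H4.
by move=> p; rewrite H5 /toN !E.
Qed.

Lemma proj k X0 X : reach (pc S) X0 X -> Inv k X0 -> Inv k X.
Proof.
elim=> [m m' E|m u m' Hen _ IH] HI; first exact: Inv_eq HI E.
by apply: IH; apply: Inv_step.
Qed.

Lemma Inv_init k : Inv k (mscale k (setb [:: aS])).
Proof.
exists (mscale k (setb [:: aN])), 0, (fun _ => 0); split.
- exact: reach_nil.
- by apply: reach_nil => p; rewrite /mscale mul0n.
- by [].
- move=> p Hp; rewrite /mscale /setb in_cons in_nil orbF.
  have -> : (p == aS) = false; last by rewrite muln0.
  by apply/negbTE/negP => /eqP E; move: Hp; rewrite E (negbTE aS_M).
- move=> p; rewrite sub0n mul0n addn0 /toN /mscale /setb !in_cons !in_nil !orbF eqxx baS.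
  case: ifP => // Ha; rewrite muln0; case: ifP => // Hb.
  case: ifP => // Hp.
  by have [-> _] := bigS (pN_S Hp); rewrite muln0.
Qed.


Hypothesis HsN : subsound_t N.

Lemma toN_lin f g c p : toN (fun q => f q + c * g q) p = toN f p + c * toN g p.
Proof. by rewrite /toN; case: ifP => _; [|case: ifP => _; [|case: ifP; rewrite ?muln0]]. Qed.

Lemma toN_supp X p : p \notin places (pc N) -> toN X p = 0.
Proof.
rewrite /= !in_cons !negb_or => /andP [Ha /andP [Hb Hp]].
by rewrite /toN (negbTE Ha) (negbTE Hb) (negbTE Hp).
Qed.

Lemma final : subsound_t S.
Proof.
move=> k k' m' Hk Hm H.
have [Y [s [Z [HY HZ HZa HZX HYX]]]] := proj H (Inv_init k).
set c0 := Z bM.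
have Hc0 : c0 <= s := outM HZ.
have HZs : supported (pc M) Z := reach_supported (wellflow_pc HM) (supp_init s) HZ.
set Z0 : marking := fun p => if p == bM then 0 else Z p.
have HZ0s : supported (pc M) Z0 by move=> p Hp; rewrite /Z0; case: ifP => // _; apply: HZs.
have HZ0 : reach (pc M) (mscale s (setb (inp (pc M)))) (madd Z0 (mscale c0 (setb (outp (pc M))))).
  apply: reach_eq HZ (fun _ => erefl) _ => p.
  rewrite /madd /Z0 /mscale /setb /= in_cons in_nil orbF.
  by case: eqP => [->|_]; rewrite ?muln1 ?muln0 ?addn0.
have HM2 := HsM Hc0 HZ0s HZ0.
have HL := liftM m' HM2.
set X2 := L m' (mscale (s - c0) (setb (outp (pc M)))) in HL.
have HL1 : reach (pc S) m' X2.
  apply: reach_eq HL _ (fun _ => erefl) => p.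
  rewrite /L /Z0; case: ifP => Hp.
    have -> : (p == bM) = false by apply/negbTE/negP => /eqP E; move: Hp; rewrite E (negbTE bM_M).
    rewrite HZX // /madd /mscale /setb in_cons in_nil orbF.
    have -> : (p == bS) = false by apply/negbTE/negP => /eqP E; move: Hp; rewrite E (negbTE bS_M).
    by rewrite muln0 addn0.
  by rewrite abM eqxx HZa !mul0n !addn0.
have HX2N p : toN X2 p = toN m' p + (s - c0) * postb (pc N) t p.
  rewrite (toN_ext (g := fun q => m' q + (s - c0) * fromN (postb (pc N) t) q)).
    by rewrite toN_lin toN_fromN // => q /(supN Ht) [].
  move=> q Hq; rewrite /X2 /L (negbTE Hq) /mscale /setb /= !in_cons !in_nil !orbF eqxx abM.
  by rewrite muln0 mul0n addn0 muln1.
have HYeq p : Y p = toN X2 p + k' * nat_of_bool (p == bN).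
  rewrite HYX HX2N.
  rewrite (toN_ext (g := fun q => m' q + k' * setb [:: bS] q)) ?toN_lin; last first.
    by move=> q _; rewrite /madd /mscale.
  suff -> : toN (setb [:: bS]) p = nat_of_bool (p == bN) by lia.
  rewrite /toN /setb !in_cons !in_nil !orbF eqxx abS.
  case: ifP => [/eqP ->|_]; first by rewrite abN.
  case: ifP => // _; case: ifP => // Hp.
  by have [_ ->] := bigS (pN_S Hp).
set j := toN X2 bN + k'.
have HYs : supported (pc N) Y.
  move=> p Hp; rewrite HYeq toN_supp //.
  move: Hp; rewrite /= !in_cons !negb_or => /andP [_ /andP [/negbTE -> _]].
  by rewrite muln0.
have Hj : j <= k.
  by have := out_le HN HsN HY HYs; rewrite HYeq eqxx muln1.
set m2 : marking := fun p => if p == bN then 0 else toN X2 p.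
have Hm2s : supported (pc N) m2.
  by move=> p Hp; rewrite /m2; case: ifP => // _; apply: toN_supp.
have HN2 : reach (pc N) m2 (mscale (k - j) (setb (outp (pc N)))).
  apply: (HsN Hj Hm2s); apply: reach_eq HY (fun _ => erefl) _ => p.
  rewrite HYeq /madd /m2 /mscale /setb /= in_cons in_nil orbF.
  by case: eqP => [->|_]; rewrite /j ?muln1 ?muln0 ?addn0.
have HS2 := reach_add (mscale (j - k') (setb [:: bS])) (liftN HN2).
apply: (reach_trans HL1); apply: reach_eq HS2 _ _ => p.
- rewrite /madd /fromN /mscale /setb /m2 in_cons in_nil orbF.
  case: (p =P aS) => [->|/eqP/negbTE Ha].
    by rewrite abN abS muln0 addn0 /toN eqxx.
  case: (p =P bS) => [->|/eqP/negbTE Hb].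
    by rewrite eqxx muln1 add0n /j addnK /toN baN eqxx.
  rewrite ?Hb muln0 addn0.
  case: ifP => Hp.
    have [H1 H2] := bigN (places_nodes Hp).
    by rewrite H2 /toN H1 H2 Hp.
  rewrite /X2 /L /mscale /setb /= in_cons in_nil orbF; case: ifP => HpM.
    have -> : (p == bM) = false by apply/negbTE/negP => /eqP E; move: HpM; rewrite E (negbTE bM_M).
    by rewrite muln0.
  have -> : m' p = 0 by apply: Hm; rewrite /= !in_cons mem_cat Ha Hb Hp HpM.
  by rewrite /fromN Ha Hb Hp !muln0.
- rewrite /madd /fromN /mscale /setb /= !in_cons !in_nil !orbF.
  case: (p =P aS) => [->|/eqP/negbTE Ha]; first by rewrite abN abS !muln0.
  case: (p =P bS) => [_|_]; first by rewrite eqxx !muln1 /j; lia.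
  rewrite !muln0 addn0; case: ifP => // Hp.
  by rewrite (bigN (places_nodes Hp)).2 muln0.
Qed.
End Subst.


Theorem mainTheorem14 (N M : wfnet) (t : nat) :
  is_tWF N -> subsound_t N ->
  is_tWF M -> subsound_t M ->
  disjoint_nodes N M ->
  t \in trans N ->
  subsound_t (subst N t M).
Proof.
move=> HN HsN HM HsM Hd Ht.
exact: final HN HM Hd Ht HsM HsN.
Qed.
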